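(* Assume that every $3$-uniform hypergraph on $8$ vertices not containing a Fano plane has at most $48$ edges, and that the only such hypergraph with exactly $48$ edges (up to isomorphism) is $B_8$. Now let $n\ge 9$ be odd and let $H$ be a $3$-uniform hypergraph on $n$ vertices with $b(n)$ edges which does not contain a Fano plane. Suppose that whenever a four-element set $K\subseteq V(H)$ induces a tetrahedron in $H$ (i) we have $H\setminus K\cong B_{n-4}$, and (ii) every vertex $v\in V(H)\setminus K$ has degree exactly $5$ in $K$. Then $H$ is isomorphic to $B_n$.
   Context: ''Containing'' means having a (not necessarily induced) subhypergraph isomorphic to it. The Fano plane is the hypergraph on vertex set $\{1,\dots,7\}$ with edges $123,345,156,147,367,257,246$. For $m\ge1$, $B_m$ is the $3$-uniform hypergraph on $m$ vertices with a partition $V=X\cup Y$ into disjoint sets with $||X|-|Y||\le 1$ whose edges are exactly the triples meeting both $X$ and $Y$, and $b(m)=\frac{m-2}{2}\lfloor m^2/4\rfloor$ is its number of edges. A set $K$ of four vertices induces a tetrahedron if all four triples in $K$ are edges. $H\setminus K$ is the subhypergraph induced on $V(H)\setminus K$. The degree of $v$ in $K$ is the number of pairs $\{a,b\}\subseteq K$ with $\{v,a,b\}$ an edge of $H$. *)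

(* Defs.v *)
From mathcomp Require Import all_boot.
Set Implicit Arguments. Unset Strict Implicit. Unset Printing Implicit Defensive.

Definition uniform3 (T : finType) (V : {set T}) (E : {set {set T}}) : Prop :=
  forall e, e \in E -> (e \subset V) /\ #|e| = 3.

Definition hiso (T T' : finType) (V : {set T}) (E : {set {set T}})
    (V' : {set T'}) (E' : {set {set T'}}) : Prop :=
  exists f : T -> T',
    [/\ {in V &, injective f}, f @: V = V' &
        forall e : {set T}, e \subset V -> (e \in E <-> f @: e \in E')].

(* Fano plane on 'I_7 (vertices 1..7 renamed 0..6):
   123,345,156,147,367,257,246. *)
Definition tri (a b c : nat) : {set 'I_7} := [set inord a; inord b; inord c].
Definition fano_edges : seq {set 'I_7} :=
  [:: tri 0 1 2; tri 2 3 4; tri 0 4 5; tri 0 3 6; tri 2 5 6; tri 1 4 6; tri 1 3 5].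

(* Containing a Fano plane = having a (not necessarily induced) copy of it. *)
Definition contains_fano (T : finType) (V : {set T}) (E : {set {set T}}) : Prop :=
  exists f : 'I_7 -> T,
    [/\ injective f, (forall i, f i \in V) &
        forall t, t \in fano_edges -> f @: t \in E].

Definition Bm (m : nat) : {set {set 'I_m}} :=
  [set e : {set 'I_m} | [&& #|e| == 3, [exists x in e, x < m./2] &
                             [exists y in e, m./2 <= y]]].

(* b(m) = (m-2)/2 * floor(m^2/4)  (always an integer). *)
Definition b (m : nat) : nat := ((m - 2) * (m * m %/ 4)) %/ 2.

Definition tetra (T : finType) (E : {set {set T}}) (K : {set T}) : Prop :=
  #|K| = 4 /\ forall e : {set T}, e \subset K -> #|e| = 3 -> e \in E.

Definition degK (T : finType) (E : {set {set T}}) (K : {set T}) (v : T) : nat :=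
  #|[set p : {set T} | [&& p \subset K, #|p| == 2 & v |: p \in E]]|.

Definition induced (T : finType) (E : {set {set T}}) (W : {set T}) : {set {set T}} :=
  [set e in E | e \subset W].

(* Main.v *)
Require Import Defs.
From mathcomp Require Import all_boot.
From mathcomp Require Import zify.
Set Implicit Arguments. Unset Strict Implicit. Unset Printing Implicit Defensive.


Section Comb.
Variable T : finType.
Variable f : T -> T -> T -> bool.
Hypothesis fS12 : forall x y z, f x y z = f y x z.
Hypothesis fS23 : forall x y z, f x y z = f x z y.

Definition dist4 (a b c d : T) := [&& a != b, a != c, a != d, b != c, b != d & c != d].
Definition out4 (v a b c d : T) := [&& v != a, v != b, v != c & v != d].
Definition deg a b c d v : nat :=
  f v a b + f v a c + f v a d + f v b c + f v b d + f v c d.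

Hypothesis D : forall a b c d v, dist4 a b c d -> f a b c -> f a b d -> f a c d -> f b c d ->
  out4 v a b c d -> deg a b c d v = 5.

Ltac fsym := first [ assumption | rewrite fS12; assumption | rewrite fS23; assumption
  | rewrite fS12 fS23; assumption | rewrite fS23 fS12; assumption
  | rewrite fS12 fS23 fS12; assumption ].

Ltac srt x y := rewrite ?(fS12 y x) ?(fS23 _ y x).

Ltac bcase := repeat match goal with |- context [f ?a ?b ?c] => case: (f a b c) end.

Ltac neq := rewrite /dist4 /out4; repeat (apply/andP; split); by [|rewrite eq_sym].

Lemma L1 t1 t2 t3 t4 x y : dist4 t1 t2 t3 t4 -> f t1 t2 t3 -> f t1 t2 t4 -> f t1 t3 t4 ->
  f t2 t3 t4 -> out4 x t1 t2 t3 t4 -> out4 y t1 t2 t3 t4 -> x != y ->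
  ~~ f x t1 t2 -> ~~ f y t1 t3 -> False.
Proof.
move=> Hd h1 h2 h3 h4 Hx Hy xy nx ny.
move: (Hd) => /and3P[n12 n13 /and4P[n14 n23 n24 n34]].
move: (Hx) => /and4P[x1 x2 x3 x4]; move: (Hy) => /and4P[y1 y2 y3 y4].
have [ex13 ex14 ex23 ex24 ex34] : [/\ f x t1 t3, f x t1 t4, f x t2 t3, f x t2 t4 & f x t3 t4].
  by move: (D Hd h1 h2 h3 h4 Hx) nx; rewrite /deg; bcase.
have [ey12 ey14 ey23 ey24 ey34] : [/\ f y t1 t2, f y t1 t4, f y t2 t3, f y t2 t4 & f y t3 t4].
  by move: (D Hd h1 h2 h3 h4 Hy) ny; rewrite /deg; bcase.
have [g1 g3 g4] : [/\ f x y t1, f x y t3 & f x y t4].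
  have Hd' : dist4 x t1 t3 t4 by neq.
  have Ho : out4 y x t1 t3 t4 by neq.
  move: (D Hd' ex13 ex14 ex34 h3 Ho) ny; rewrite /deg; srt x y; rewrite ey14 ey34.
  by bcase.
have g2 : ~~ f x y t2.
  have Hd' : dist4 x t2 t3 t4 by neq.
  have Ho : out4 y x t2 t3 t4 by neq.
  move: (D Hd' ex23 ex24 ex34 h4 Ho); rewrite /deg; srt x y; rewrite ey23 ey24 ey34 g3 g4.
  by bcase.
have Hd' : dist4 y t1 t2 t4 by neq.
have Ho : out4 x y t1 t2 t4 by neq.
move: (D Hd' ey12 ey14 ey24 h2 Ho); rewrite /deg; rewrite g1 (negbTE g2) g4 (negbTE nx) ex14 ex24.
by [].
Qed.

Definition HGp a b c d := forall v, out4 v a b c d ->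
  [/\ f v a c, f v a d, f v b c, f v b d & f v a b = ~~ f v c d].

Lemma G1 a b c d v0 : dist4 a b c d -> f a b c -> f a b d -> f a c d -> f b c d ->
  out4 v0 a b c d -> ~~ f v0 a b -> HGp a b c d.
Proof.
move=> Hd h1 h2 h3 h4 H0 n0 v Hv.
move: (Hd) => /and3P[n12 n13 /and4P[n14 n23 n24 n34]].
move: (H0) => /and4P[x1 x2 x3 x4]; move: (Hv) => /and4P[y1 y2 y3 y4].
have Dv := D Hd h1 h2 h3 h4 Hv; rewrite /deg in Dv.
have [->|nv] := eqVneq v v0.
  by move: (D Hd h1 h2 h3 h4 H0) n0; rewrite /deg; bcase.
have e1 : f v a c.
  apply/negP => /negP nn; apply: (@L1 a b c d v0 v) => //.
  by rewrite eq_sym.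
have e2 : f v a d.
  apply/negP => /negP nn; apply: (@L1 a b d c v0 v) => //; try neq; try fsym.
have e3 : f v b c.
  apply/negP => /negP nn; apply: (@L1 b a c d v0 v) => //; try neq; try fsym.
have e4 : f v b d.
  apply/negP => /negP nn; apply: (@L1 b a d c v0 v) => //; try neq; try fsym.
by split => //; move: Dv; rewrite e1 e2 e3 e4; bcase.
Qed.

Lemma HGswap a b c d : HGp a b c d -> HGp c d a b.
Proof.
move=> H v Hv; have Hv' : out4 v a b c d.
  by move: Hv; rewrite /out4; case/and4P => -> -> -> ->.
case: (H v Hv') => h1 h2 h3 h4 h5; split; try fsym.
by rewrite h5 negbK.
Qed.

Lemma G2a a b c d u w : dist4 a b c d -> f a b c -> f a b d -> f a c d -> f b c d ->
  HGp a b c d -> out4 u a b c d -> out4 w a b c d -> u != w ->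
  ~~ f u a b -> ~~ f w a b -> [/\ ~~ f u w a, ~~ f u w b, f u w c & f u w d].
Proof.
move=> Hd h1 h2 h3 h4 HG Hu Hw uw nu nw.
move: (Hd) => /and3P[n12 n13 /and4P[n14 n23 n24 n34]].
move: (Hu) => /and4P[x1 x2 x3 x4]; move: (Hw) => /and4P[y1 y2 y3 y4].
case: (HG u Hu) => u1 u2 u3 u4 u5; rewrite (negbTE nu) in u5.
case: (HG w Hw) => w1 w2 w3 w4 w5; rewrite (negbTE nw) in w5.
have {}u5 : f u c d by move: u5; case: (f u c d).
have {}w5 : f w c d by move: w5; case: (f w c d).
have gc : f u w c.
  apply/negP => /negP nn; apply: (@L1 u a c d b w) => //; try neq; try fsym.
have gd : f u w d.
  apply/negP => /negP nn; apply: (@L1 u a d c b w) => //; try neq; try fsym.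
have ga : ~~ f u w a.
  have Hd' : dist4 u a c d by neq.
  have Ho : out4 w u a c d by neq.
  move: (D Hd' u1 u2 u5 h3 Ho); rewrite /deg; srt u w; rewrite gc gd w1 w2 w5.
  by bcase.
have gb : ~~ f u w b.
  have Hd' : dist4 u b c d by neq.
  have Ho : out4 w u b c d by neq.
  move: (D Hd' u3 u4 u5 h4 Ho); rewrite /deg; srt u w; rewrite gc gd w3 w4 w5.
  by bcase.
by [].
Qed.

Lemma G2b a b c d u w : dist4 a b c d -> f a b c -> f a b d -> f a c d -> f b c d ->
  HGp a b c d -> out4 u a b c d -> out4 w a b c d -> u != w ->
  ~~ f u a b -> ~~ f w c d -> [/\ f u w a, f u w b, f u w c & f u w d].
Proof.
move=> Hd h1 h2 h3 h4 HG Hu Hw uw nu nw.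
move: (Hd) => /and3P[n12 n13 /and4P[n14 n23 n24 n34]].
move: (Hu) => /and4P[x1 x2 x3 x4]; move: (Hw) => /and4P[y1 y2 y3 y4].
case: (HG u Hu) => u1 u2 u3 u4 u5; rewrite (negbTE nu) in u5.
case: (HG w Hw) => w1 w2 w3 w4 w5.
have {}u5 : f u c d by move: u5; case: (f u c d).
have [ga gc gd] : [/\ f u w a, f u w c & f u w d].
  have Hd' : dist4 u a c d by neq.
  have Ho : out4 w u a c d by neq.
  move: (D Hd' u1 u2 u5 h3 Ho); rewrite /deg; srt u w; rewrite w1 w2 (negbTE nw).
  by bcase.
have gb : f u w b.
  have Hd' : dist4 u b c d by neq.
  have Ho : out4 w u b c d by neq.
  move: (D Hd' u3 u4 u5 h4 Ho); rewrite /deg; srt u w; rewrite w3 w4 (negbTE nw) gc gd.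
  by bcase.
by [].
Qed.

Lemma G3a a b c d u v w : dist4 a b c d -> f a b c -> f a b d -> f a c d -> f b c d ->
  HGp a b c d -> out4 u a b c d -> out4 v a b c d -> out4 w a b c d ->
  u != v -> u != w -> v != w ->
  ~~ f u a b -> ~~ f v a b -> ~~ f w a b -> ~~ f u v w.
Proof.
move=> Hd h1 h2 h3 h4 HG Hu Hv Hw uv uw vw nu nv nw.
move: (Hd) => /and3P[n12 n13 /and4P[n14 n23 n24 n34]].
move: (Hu) => /and4P[x1 x2 x3 x4]; move: (Hv) => /and4P[y1 y2 y3 y4].
move: (Hw) => /and4P[z1 z2 z3 z4].
case: (G2a Hd h1 h2 h3 h4 HG Hu Hv uv nu nv) => a1 _ c1 _.
case: (G2a Hd h1 h2 h3 h4 HG Hu Hw uw nu nw) => a2 _ c2 _.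
case: (G2a Hd h1 h2 h3 h4 HG Hv Hw vw nv nw) => a3 _ c3 _.
apply/negP => e.
have Hd' : dist4 u v w c by neq.
have Ho : out4 a u v w c by neq.
move: (D Hd' e c1 c2 c3 Ho); rewrite /deg.
do 3 (srt u a; srt v a; srt w a).
by rewrite (negbTE a1) (negbTE a2) (negbTE a3); bcase.
Qed.

Lemma G3b a b c d u v w : dist4 a b c d -> f a b c -> f a b d -> f a c d -> f b c d ->
  HGp a b c d -> out4 u a b c d -> out4 v a b c d -> out4 w a b c d ->
  u != v -> u != w -> v != w ->
  ~~ f u a b -> ~~ f v a b -> ~~ f w c d -> f u v w.
Proof.
move=> Hd h1 h2 h3 h4 HG Hu Hv Hw uv uw vw nu nv nw.
move: (Hd) => /and3P[n12 n13 /and4P[n14 n23 n24 n34]].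
move: (Hu) => /and4P[x1 x2 x3 x4]; move: (Hv) => /and4P[y1 y2 y3 y4].
move: (Hw) => /and4P[z1 z2 z3 z4].
case: (G2a Hd h1 h2 h3 h4 HG Hu Hv uv nu nv) => a1 _ _ _.
case: (G2b Hd h1 h2 h3 h4 HG Hu Hw uw nu nw) => e1 _ e2 _.
case: (HG u Hu) => u1 _ _ _ _; case: (HG w Hw) => w1 _ _ _ _.
apply/negP => /negP e.
have Hd' : dist4 u w a c by neq.
have Ho : out4 v u w a c by neq.
move: (D Hd' e1 e2 u1 w1 Ho); rewrite /deg.
do 2 (srt u v; srt v w).
by rewrite (negbTE a1) (negbTE e); bcase.
Qed.

Definition mono (p q r : bool) := ~~ ((p == q) && (q == r)).

Ltac fin := rewrite /mono /=; first [by [] | apply/negbTE; fsym | fsym].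

Lemma colE a b c d (col : T -> bool) : dist4 a b c d -> f a b c -> f a b d -> f a c d -> f b c d ->
  HGp a b c d -> col a = false -> col b = false -> col c = true -> col d = true ->
  (forall v, out4 v a b c d -> col v = ~~ f v c d) ->
  forall x y z, x != y -> x != z -> y != z -> f x y z = mono (col x) (col y) (col z).
Proof.
move=> Hd h1 h2 h3 h4 HG ca cb cc cd cO.
move: (Hd) => /and3P[n12 n13 /and4P[n14 n23 n24 n34]].
have HG' := HGswap HG.
have Hd2 : dist4 c d a b by neq.
have k1 : f c d a by fsym.
have k2 : f c d b by fsym.
have k3 : f c a b by fsym.
have k4 : f d a b by fsym.
pose inK x := [|| x == a, x == b, x == c | x == d].
have outE v : ~~ inK v -> out4 v a b c d.
  by rewrite /inK /out4 !negb_or.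
have outE2 v : ~~ inK v -> out4 v c d a b.
  by rewrite /inK /out4 !negb_or => /and4P[-> -> -> ->].
have nsym (x y : T) : x != y -> y != x by rewrite eq_sym.
have T0 u v w : ~~ inK u -> ~~ inK v -> ~~ inK w -> u != v -> u != w -> v != w ->
    f u v w = mono (col u) (col v) (col w).
  move=> /[dup] /outE Hu /outE2 Hu2 /[dup] /outE Hv /outE2 Hv2 /[dup] /outE Hw /outE2 Hw2 uv uw vw.
  rewrite (cO u Hu) (cO v Hv) (cO w Hw).
  case: (HG u Hu) => _ _ _ _ u5; case: (HG v Hv) => _ _ _ _ v5; case: (HG w Hw) => _ _ _ _ w5.
  case eu: (f u c d); case ev: (f v c d); case ew: (f w c d).
  - have := G3a Hd h1 h2 h3 h4 HG Hu Hv Hw uv uw vw; rewrite ?u5 ?v5 ?w5 ?eu ?ev ?ew => h.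
    have {}h := h isT isT isT; fin.
  - have h := G3b Hd h1 h2 h3 h4 HG Hu Hv Hw uv uw vw; rewrite ?u5 ?v5 ?w5 ?eu ?ev ?ew in h.
    have {}h := h isT isT isT; fin.
  - have h := G3b Hd h1 h2 h3 h4 HG Hu Hw Hv uw uv (nsym _ _ vw); rewrite ?u5 ?v5 ?w5 ?eu ?ev ?ew in h.
    have {}h := h isT isT isT; fin.
  - have h := G3b Hd2 k1 k2 k3 k4 HG' Hv2 Hw2 Hu2 vw (nsym _ _ uv) (nsym _ _ uw).
    rewrite ?u5 ?v5 ?w5 ?eu ?ev ?ew in h; have {}h := h isT isT isT; fin.
  - have h := G3b Hd h1 h2 h3 h4 HG Hv Hw Hu vw (nsym _ _ uv) (nsym _ _ uw).
    rewrite ?u5 ?v5 ?w5 ?eu ?ev ?ew in h; have {}h := h isT isT isT; fin.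
  - have h := G3b Hd2 k1 k2 k3 k4 HG' Hu2 Hw2 Hv2 uw uv (nsym _ _ vw).
    rewrite ?u5 ?v5 ?w5 ?eu ?ev ?ew in h; have {}h := h isT isT isT; fin.
  - have h := G3b Hd2 k1 k2 k3 k4 HG' Hu2 Hv2 Hw2 uv uw vw.
    rewrite ?u5 ?v5 ?w5 ?eu ?ev ?ew in h; have {}h := h isT isT isT; fin.
  - have h := G3a Hd2 k1 k2 k3 k4 HG' Hu2 Hv2 Hw2 uv uw vw.
    rewrite ?u5 ?v5 ?w5 ?eu ?ev ?ew in h; have {}h := h isT isT isT; fin.
have T1 u w k : ~~ inK u -> ~~ inK w -> inK k -> u != w ->
    f u w k = mono (col u) (col w) (col k).
  move=> /[dup] /outE Hu /outE2 Hu2 /[dup] /outE Hw /outE2 Hw2 Hk uw.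
  rewrite (cO u Hu) (cO w Hw).
  case: (HG u Hu) => _ _ _ _ u5; case: (HG w Hw) => _ _ _ _ w5.
  case eu: (f u c d); case ew: (f w c d).
  - have := G2a Hd h1 h2 h3 h4 HG Hu Hw uw; rewrite ?u5 ?w5 ?eu ?ew => h.
    case: (h isT isT) => g1 g2 g3 g4.
    by case/or4P: Hk => /eqP ->; rewrite ?ca ?cb ?cc ?cd; fin.
  - have := G2b Hd h1 h2 h3 h4 HG Hu Hw uw; rewrite ?u5 ?w5 ?eu ?ew => h.
    case: (h isT isT) => g1 g2 g3 g4.
    by case/or4P: Hk => /eqP ->; rewrite ?ca ?cb ?cc ?cd; fin.
  - have := G2b Hd h1 h2 h3 h4 HG Hw Hu (nsym _ _ uw); rewrite ?u5 ?w5 ?eu ?ew => h.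
    case: (h isT isT) => g1 g2 g3 g4.
    by case/or4P: Hk => /eqP ->; rewrite ?ca ?cb ?cc ?cd; fin.
  - have := G2a Hd2 k1 k2 k3 k4 HG' Hu2 Hw2 uw; rewrite ?u5 ?w5 ?eu ?ew => h.
    case: (h isT isT) => g1 g2 g3 g4.
    by case/or4P: Hk => /eqP ->; rewrite ?ca ?cb ?cc ?cd; fin.
have T2 v x y : ~~ inK v -> inK x -> inK y -> x != y ->
    f v x y = mono (col v) (col x) (col y).
  move=> /outE Hv Hx Hy; rewrite (cO v Hv).
  case: (HG v Hv) => v1 v2 v3 v4 v5.
  case/or4P: Hx => /eqP ->; case/or4P: Hy => /eqP ->; rewrite ?eqxx // ?ca ?cb ?cc ?cd => _;
  srt a b; srt a c; srt a d; srt b c; srt b d; srt c d; rewrite ?v1 ?v2 ?v3 ?v4 ?v5 /mono;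
  by case: (f v c d).
have T3 x y z : inK x -> inK y -> inK z -> x != y -> x != z -> y != z ->
    f x y z = mono (col x) (col y) (col z).
  move=> Hx Hy Hz.
  case/or4P: Hx => /eqP ->; case/or4P: Hy => /eqP ->; case/or4P: Hz => /eqP ->;
  rewrite ?eqxx // ?ca ?cb ?cc ?cd => _ _ _; fin.
have fP1 x y z : f x y z = f z x y by rewrite fS23 fS12.
have fP2 x y z : f x y z = f y z x by rewrite fS12 fS23.
move=> x y z xy xz yz.
case: (boolP (inK x)) => Hx; case: (boolP (inK y)) => Hy; case: (boolP (inK z)) => Hz.
- exact: T3.
- rewrite fP1 T2 //; rewrite /mono; by case: (col x); case: (col y); case: (col z).
- rewrite fS12 T2 //; rewrite /mono; by case: (col x); case: (col y); case: (col z).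
- rewrite fP2 T1 //; rewrite /mono; by case: (col x); case: (col y); case: (col z).
- rewrite T2 //.
- rewrite fS23 T1 //; rewrite /mono; by case: (col x); case: (col y); case: (col z).
- rewrite T1 //.
- exact: T0.
Qed.
End Comb.


Section Sets.
Variable T : finType.

Lemma set3C12 (x y z : T) : [set x; y; z] = [set y; x; z].
Proof. by apply/setP => t; rewrite !inE; case: (t == x); case: (t == y); case: (t == z). Qed.
Lemma set3C23 (x y z : T) : [set x; y; z] = [set x; z; y].
Proof. by apply/setP => t; rewrite !inE; case: (t == x); case: (t == y); case: (t == z). Qed.

Lemma card3 (x y z : T) : x != y -> x != z -> y != z -> #|[set x; y; z]| = 3.
Proof.
move=> xy xz yz; rewrite -setUA cardsU1 cards2 yz !inE negb_or xy xz.
by [].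
Qed.

Lemma card3P (e : {set T}) : #|e| = 3 ->
  exists x y z, [/\ x != y, x != z, y != z & e = [set x; y; z]].
Proof.
move=> he; have /card_gt0P[x xe] : 0 < #|e| by rewrite he.
have : #|e :\ x| == 2 by rewrite (cardsD1 x e) xe add1n in he; case: he => ->.
case/cards2P => y [z [yz exy]].
have : y \in e :\ x by rewrite exy !inE eqxx.
have : z \in e :\ x by rewrite exy !inE eqxx orbT.
rewrite !inE => /andP[zx _] /andP[yx _].
exists x, y, z; split => //; try by rewrite eq_sym.
by rewrite -setUA -exy setD1K.
Qed.

Lemma ex3 (P : pred T) x y z : [exists t in [set x; y; z], P t] = [|| P x, P y | P z].
Proof.
apply/existsP/idP => [[t /andP[]]|].
  by rewrite !inE => /orP[/orP[]|] /eqP-> ->; rewrite ?orbT.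
case/or3P => h; [exists x | exists y | exists z]; by rewrite !inE eqxx ?orbT h.
Qed.

End Sets.


Definition fE (T : finType) (E : {set {set T}}) (x y z : T) := [set x; y; z] \in E.

Lemma fE12 (T : finType) (E : {set {set T}}) x y z : fE E x y z = fE E y x z.
Proof. by rewrite /fE set3C12. Qed.
Lemma fE23 (T : finType) (E : {set {set T}}) x y z : fE E x y z = fE E x z y.
Proof. by rewrite /fE set3C23. Qed.

Lemma neqset (T : finType) (A B : {set T}) t : t \in A -> t \notin B -> A != B.
Proof. by move=> tA tB; apply/negP => /eqP ABe; move: tB; rewrite -ABe tA. Qed.

Lemma D_of (T : finType) (E : {set {set T}})
  (H2 : forall K, tetra E K -> forall v, v \notin K -> degK E K v = 5) :
  forall a b c d v, dist4 a b c d -> fE E a b c -> fE E a b d -> fE E a c d -> fE E b c d ->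
  out4 v a b c d -> deg (fE E) a b c d v = 5.
Proof.
move=> a b c d v Hd h1 h2 h3 h4 Hv.
move: (Hd) => /and3P[n12 n13 /and4P[n14 n23 n24 n34]].
move: (Hv) => /and4P[x1 x2 x3 x4].
have r12 := negbTE n12; have r13 := negbTE n13; have r14 := negbTE n14.
have r23 := negbTE n23; have r24 := negbTE n24; have r34 := negbTE n34.
have s12 : (b == a) = false by rewrite eq_sym.
have s13 : (c == a) = false by rewrite eq_sym.
have s14 : (d == a) = false by rewrite eq_sym.
have s23 : (c == b) = false by rewrite eq_sym.
have s24 : (d == b) = false by rewrite eq_sym.
have s34 : (d == c) = false by rewrite eq_sym.
pose K := [set a; b; c; d].
have tK : tetra E K.
  split.
    rewrite /K setUC cardsU1 card3 // !inE s14 s24 s34.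
    by [].
  move=> e eK /card3P [x [y [z [xy xz yz ee]]]]; subst e.
  have := subsetP eK x; have := subsetP eK y; have := subsetP eK z.
  rewrite !inE !eqxx ?orbT => /(_ isT) hz /(_ isT) hy /(_ isT) hx.
  move: xy xz yz.
  case/orP: hx => [/orP[/orP[]|]|] /eqP ->;
  case/orP: hy => [/orP[/orP[]|]|] /eqP ->;
  case/orP: hz => [/orP[/orP[]|]|] /eqP ->; rewrite ?eqxx // => _ _ _;
  rewrite /fE in h1 h2 h3 h4;
  first [ assumption | rewrite set3C12; assumption | rewrite set3C23; assumption
  | rewrite set3C12 set3C23; assumption | rewrite set3C23 set3C12; assumption
  | rewrite set3C12 set3C23 set3C12; assumption ].
have vK : v \notin K by rewrite !inE !negb_or x1 x2 x3 x4.
rewrite -(H2 K tK v vK).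
pose s := [:: [set a; b]; [set a; c]; [set a; d]; [set b; c]; [set b; d]; [set c; d]].
have sw (x y : T) : [set x; y] = [set y; x] by apply: setUC.
have eqS : [set p : {set T} | [&& p \subset K, #|p| == 2 & v |: p \in E]] =
           [set p : {set T} in filter (fun p : {set T} => v |: p \in E) s].
  apply/setP => p; rewrite !inE mem_filter andbA andbC; congr (_ && _).
  apply/andP/idP => [[/subsetP pK /cards2P [x [y [xy pe]]]]|].
    subst p; have := pK x; have := pK y; rewrite !inE !eqxx ?orbT => /(_ isT) hy /(_ isT) hx.
    move: xy.
    case/orP: hx => [/orP[/orP[]|]|] /eqP ->;
    case/orP: hy => [/orP[/orP[]|]|] /eqP ->; rewrite ?eqxx /= ?orbT // => _;
    match goal with |- context [[set ?x; ?y] == _] =>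
      first [ by rewrite eqxx ?orbT | by rewrite (sw x y) eqxx ?orbT ] end.
  rewrite !inE => /orP[|/orP[|/orP[|/orP[|/orP[|]]]]] /eqP ->; (split;
    [apply/subsetP => t; rewrite !inE => /orP[] /eqP ->; rewrite !eqxx ?orbT //
    | rewrite cards2 ?r12 ?r13 ?r14 ?r23 ?r24 ?r34 //]).
rewrite /degK eqS cardsE.
have us : uniq s.
  rewrite /= !inE !negb_or.
  repeat (apply/andP; split); try done;
  match goal with |- is_true ([set ?x; ?y] != _) =>
    first [ apply: (neqset (t:=x)); by rewrite !inE ?eqxx ?r12 ?r13 ?r14 ?r23 ?r24 ?r34 ?s12 ?s13 ?s14 ?s23 ?s24 ?s34
          | apply: (neqset (t:=y)); by rewrite !inE ?eqxx ?r12 ?r13 ?r14 ?r23 ?r24 ?r34 ?s12 ?s13 ?s14 ?s23 ?s24 ?s34 ] end.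
rewrite (card_uniqP _) ?filter_uniq // size_filter /= /deg /fE !setUA.
by rewrite !addnA addn0.
Qed.


Lemma tetra_dec (T : finType) (E : {set {set T}}) K : tetra E K ->
  exists a b c d, [/\ K = [set a; b; c; d], dist4 a b c d &
     [/\ fE E a b c, fE E a b d, fE E a c d & fE E b c d]].
Proof.
case=> cK HK.
have /card_gt0P[a aK] : 0 < #|K| by rewrite cK.
have : #|K :\ a| = 3 by move: cK; rewrite (cardsD1 a K) aK add1n; case.
case/card3P => b [c [d [bc bd cd Ke]]].
have : a \notin K :\ a by rewrite !inE eqxx.
rewrite Ke !inE !negb_or => /andP[/andP[ab ac] ad].
have KE : K = [set a; b; c; d] by rewrite -(setD1K aK) Ke !setUA.
have sub3 x y z : x \in K -> y \in K -> z \in K -> x != y -> x != z -> y != z -> fE E x y z.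
  move=> xK yK zK xy xz yz; apply: HK; last exact: card3.
  by apply/subsetP => t; rewrite !inE => /orP[/orP[]|] /eqP ->.
have iK : [/\ a \in K, b \in K, c \in K & d \in K] by rewrite KE !inE !eqxx ?orbT.
case: iK => aK' bK cK' dK.
exists a, b, c, d; split => //.
  by rewrite /dist4 ab ac ad bc bd cd.
by split; apply: sub3.
Qed.

Lemma sum_ind (X : finType) (A : {set X}) (P : pred X) :
  \sum_(x in A) (P x : nat) = #|[set x in A | P x]|.
Proof.
rewrite -sum1_card [RHS]big_mkcond [LHS]big_mkcond; apply: eq_bigr => x _.
by rewrite !inE; case: (x \in A); case: (P x).
Qed.

Lemma card_sup4 (T : finType) (e : {set T}) : #|e| = 3 ->
  #|[set Q in [set Q : {set T} | #|Q| == 4] | e \subset Q]| = #|T| - 3.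
Proof.
move=> ce.
have -> : [set Q in [set Q : {set T} | #|Q| == 4] | e \subset Q] = (fun x => x |: e) @: ~: e.
  apply/setP => Q; rewrite !inE; apply/andP/imsetP => [[/eqP cQ eQ]|[x xe ->]].
    have : #|Q :\: e| == 1 by rewrite cardsD (setIidPr eQ) cQ ce.
    case/cards1P => x Qx; exists x.
      have : x \in Q :\: e by rewrite Qx inE.
      by rewrite !inE => /andP[].
    by rewrite -(setID Q e) (setIidPr eQ) Qx setUC.
  split; last exact: subsetUr.
  by rewrite cardsU1 ce; move: xe; rewrite inE => ->.
rewrite card_in_imset; first by rewrite cardsCs setCK ce.
move=> x y; rewrite !inE => xe ye exy.
have : x \in y |: e by rewrite -exy setU11.
by rewrite !inE (negbTE xe) orbF => /eqP.
Qed.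

Lemma tet_exists (T : finType) (E : {set {set T}}) : uniform3 [set: T] E -> 3 < #|T| ->
  3 * 'C(#|T|, 3) < 4 * #|E| -> exists K, tetra E K.
Proof.
move=> HE n4 big.
pose tb (Q : {set T}) := (#|Q| == 4) &&
  [forall e : {set T}, ((e \subset Q) && (#|e| == 3)) ==> (e \in E)].
case: (boolP [exists Q, tb Q]) => [/existsP[Q /andP[/eqP cQ /forallP HQ]]|].
  by exists Q; split => // e eQ ce; move: (HQ e); rewrite eQ ce eqxx.
rewrite negb_exists => /forallP noT.
have le3 (Q : {set T}) : #|Q| = 4 -> #|[set e in E | e \subset Q]| <= 3.
  move=> cQ; rewrite leqNgt; apply/negP => gt3.
  have sub : [set e in E | e \subset Q] \subset [set e : {set T} | e \subset Q & #|e| == 3].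
    apply/subsetP => e; rewrite !inE => /andP[eE ->]; by case: (HE e eE) => _ ->.
  have c3 : #|[set e : {set T} | e \subset Q & #|e| == 3]| = 4 by rewrite cards_draws cQ.
  have eqs : [set e in E | e \subset Q] = [set e : {set T} | e \subset Q & #|e| == 3].
    by apply/eqP; rewrite eqEcard sub c3 /=.
  have := noT Q; rewrite /tb cQ eqxx /= => /negP; apply; apply/forallP => e.
  apply/implyP => /andP[eQ ce].
  have : e \in [set e : {set T} | e \subset Q & #|e| == 3] by rewrite inE eQ ce.
  by rewrite -eqs inE => /andP[].
pose S4 := [set Q : {set T} | #|Q| == 4].
have S : \sum_(Q in S4) #|[set e in E | e \subset Q]| = #|E| * (#|T| - 3).
  transitivity (\sum_(Q in S4) \sum_(e in E) (e \subset Q : nat)).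
    by apply: eq_bigr => Q _; rewrite (sum_ind E (fun e => e \subset Q)).
  rewrite exchange_big /= -sum_nat_const; apply: eq_bigr => e eE.
  rewrite (sum_ind S4 (fun Q => e \subset Q)) card_sup4 //.
  by case: (HE e eE).
have L : \sum_(Q in S4) #|[set e in E | e \subset Q]| <= #|S4| * 3.
  rewrite -sum_nat_const; apply: leq_sum => Q; rewrite inE => /eqP; exact: le3.
rewrite S card_draws in L.
have M := mul_bin_left #|T| 3.
nia.
Qed.


Lemma binE3 n : 'C(n, 3) * 6 = n * (n - 1) * (n - 2).
Proof.
have := bin_ffact n 3; rewrite !ffactnS /= => ->.
case: n => [|[|[|n]]] //=; rewrite ffactn0; lia.
Qed.

Lemma bE n k : n = k.*2.+1 -> b n * 2 <= (n - 2) * (k * k + k) < b n * 2 + 2.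
Proof.
move=> Hn.
have Hq : n * n %/ 4 = k * k + k.
  have -> : n * n = (k * k + k) * 4 + 1.
    rewrite Hn.
    rewrite -mul2n.
   nia.
  by rewrite divnMDl // divn_small // addn0.
rewrite /b Hq.
set m := (n - 2) * (k * k + k).
have := divn_eq m 2; have := ltn_pmod m (isT : 0 < 2); lia.
Qed.

Lemma bn_big n : odd n -> 9 <= n -> 3 * 'C(n, 3) < 4 * b n.
Proof.
move=> on n9.
have Hn : n = (n./2).*2.+1 by rewrite -[LHS]odd_double_half on.
set k := n./2 in Hn.
have := bE Hn; have := binE3 n.
move: (b n) ('C(n, 3)) => B C.
rewrite Hn; nia.
Qed.

Lemma binE3' x : 'C(x, 3) * 6 + 3 * (x * x) = x * x * x + 2 * x.
Proof.
have := binE3 x.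
case: x => [|[|[|x]]] //= ->.
rewrite !subSS !subn0; nia.
Qed.

Lemma bal n x y : odd n -> 9 <= n -> x + y = n ->
  'C(n, 3) = b n + 'C(x, 3) + 'C(y, 3) -> x = n./2 \/ y = n./2.
Proof.
move=> on n9 xy HC.
have Hn : n = (n./2).*2.+1 by rewrite -[LHS]odd_double_half on.
set k := n./2 in Hn *.
have := bE Hn; have := binE3' n; have := binE3' x; have := binE3' y.
move: (b n) ('C(n, 3)) ('C(x, 3)) ('C(y, 3)) HC => B C Cx Cy HC h1 h2 h3 h4.
have k4 : 4 <= k by lia.
have E1 : x * y * (2 * k - 1) = B * 2.
  rewrite -xy in h3.
  have e : 3 * (x * y * (x + y)) = B * 6 + 6 * (x * y) by lia.
  have e2 : x + y = (2 * k - 1) + 2 by lia.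
  rewrite e2 in e; lia.
have E2 : x * y = k * k + k.
  move: h4; rewrite Hn -E1 -mul2n.
  have -> : (2 * k).+1 - 2 = 2 * k - 1 by lia.
  have M7 : 7 <= 2 * k - 1 by lia.
  move: (x * y) (k * k + k) (2 * k - 1) M7 => P Q M M7.
  case/andP => le1 lt1.
  have M0 : 0 < M by lia.
  have PQ : P <= Q by rewrite -(leq_pmul2l M0) [M * P]mulnC.
  apply/eqP; rewrite eqn_leq PQ /=; rewrite leqNgt; apply/negP => lt.
  have : M * P.+1 <= M * Q by rewrite leq_mul2l lt orbT.
  rewrite mulnS; lia.
have : x <= k \/ k.+1 <= x by lia.
case => h.
  left; move: (k - x) (subnK h) => p kp; rewrite -kp in E2 xy Hn.
  have yp : y = x + 2 * p + 1 by lia.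
  rewrite yp in E2; have : p * p + p = 0 by lia.
  lia.
right; move: (x - k.+1) (subnK h) => p kp; rewrite -kp in E2 xy.
have pk : p <= k by lia.
move: (k - p) (subnK pk) => y' ky; rewrite -ky in E2 xy.
have yy : y = y' by lia.
rewrite yy in E2; have : p * p + p = 0 by lia.
lia.
Qed.


Lemma bij_ex (T : finType) n (S : {set T}) : #|T| = n ->
  exists g : T -> 'I_n, injective g /\ forall x, (g x < #|S|) = (x \in S).
Proof.
move=> cT.
pose idx x := if x \in S then index x (enum S) else #|S| + index x (enum (~: S)).
have cS : #|S| + #|~: S| = n by rewrite cardsC.
have iS x : x \in S -> index x (enum S) < #|S|.
  by move=> xS; rewrite cardE index_mem mem_enum.
have iC x : x \notin S -> index x (enum (~: S)) < #|~: S|.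
  by move=> xS; rewrite cardE index_mem mem_enum inE.
have lt x : idx x < n.
  rewrite /idx; case: ifP => xS.
    by have := iS x xS; lia.
  by have := iC x (negbT xS); lia.
exists (fun x => Ordinal (lt x)); split.
  move=> x y /(congr1 val) /=; rewrite /idx.
  case: ifP => xS; case: ifP => yS.
  - move=> e; rewrite -(nth_index x (_ : x \in enum S)) ?mem_enum //.
    by rewrite e nth_index ?mem_enum.
  - by have := iS x xS; lia.
  - by have := iS y yS; lia.
  - move/addnI => e.
    have xC : x \in enum (~: S) by rewrite mem_enum inE xS.
    have yC : y \in enum (~: S) by rewrite mem_enum inE yS.
    by rewrite -(nth_index x xC) e nth_index.
move=> x /=; rewrite /idx; case: ifP => xS.
  by rewrite iS.
by lia.
Qed.


Lemma fin_hiso (T : finType) n (E : {set {set T}}) (g : T -> 'I_n) (h : T -> bool) :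
  injective g -> #|T| = n -> (forall x, (g x < n./2) = h x) ->
  (forall e, (e \in E) = [&& #|e| == 3, [exists x in e, h x] & [exists y in e, ~~ h y]]) ->
  hiso [set: T] E [set: 'I_n] (Bm n).
Proof.
move=> ig cT Hg HE; exists g; split.
- by move=> x y _ _; apply: ig.
- by apply/eqP; rewrite eqEcard subsetT card_imset // !cardsT card_ord cT leqnn.
move=> e _; rewrite HE /Bm inE card_imset //.
have -> : [exists x in g @: e, x < n./2] = [exists x in e, h x].
  apply/existsP/existsP => [[i /andP[/imsetP[x xe ->] lt]]|[x /andP[xe hx]]].
    by exists x; rewrite xe -Hg lt.
  by exists (g x); rewrite imset_f // Hg hx.
have -> : [exists x in g @: e, n./2 <= x] = [exists x in e, ~~ h x].
  apply/existsP/existsP => [[i /andP[/imsetP[x xe ->] lt]]|[x /andP[xe hx]]].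
    by exists x; rewrite xe -Hg -leqNgt lt.
  by exists (g x); rewrite imset_f // leqNgt Hg hx.
by [].
Qed.

Lemma struct_hiso (T : finType) n (E : {set {set T}}) (c : T -> bool) :
  #|T| = n -> odd n -> 9 <= n -> #|E| = b n ->
  (forall e, (e \in E) = [&& #|e| == 3, [exists x in e, ~~ c x] & [exists y in e, c y]]) ->
  hiso [set: T] E [set: 'I_n] (Bm n).
Proof.
move=> cT on n9 cE HE.
pose X := [set x | ~~ c x]; pose Y := [set x | c x].
have YX : Y = ~: X by apply/setP => x; rewrite !inE negbK.
have cXY : #|X| + #|Y| = n by rewrite YX cardsC cT.
pose D3 := [set e : {set T} | #|e| == 3].
pose DX := [set e : {set T} | e \subset X & #|e| == 3].
pose DY := [set e : {set T} | e \subset Y & #|e| == 3].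
have ED : E \subset D3 by apply/subsetP => e; rewrite HE inE => /andP[].
have DE : D3 :\: E = DX :|: DY.
  apply/setP => e; rewrite !inE HE.
  case: (#|e| == 3); rewrite ?andbF ?andbT //=.
  rewrite negb_and !negb_exists [RHS]orbC.
  congr (_ || _); apply/forallP/subsetP.
  - by move=> H x xe; move: (H x); rewrite !inE xe /= negbK.
  - move=> H x; apply/negP => /andP[xe ncx].
    by move: (H x xe); rewrite inE (negbTE ncx).
  - by move=> H x xe; move: (H x); rewrite !inE xe /=.
  - move=> H x; apply/negP => /andP[xe cx].
    by move: (H x xe); rewrite inE cx.
have DXY : DX :&: DY = set0.
  apply/setP => e; rewrite !inE; apply/negP => /andP[/andP[sX c3] /andP[sY _]].
  have /card_gt0P[x xe] : 0 < #|e| by rewrite (eqP c3).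
  by move: (subsetP sX x xe) (subsetP sY x xe); rewrite !inE => /negP.
have count : 'C(n, 3) = b n + 'C(#|X|, 3) + 'C(#|Y|, 3).
  have := cardsID E D3; rewrite (setIidPr ED) DE.
  have := cardsUI DX DY; rewrite DXY cards0 addn0 => ->.
  rewrite card_draws !cards_draws cT cE => <-.
  by rewrite addnA.
case: (bal on n9 cXY count) => hX.
  have [g [ig Hg]] := bij_ex X cT.
  apply: (@fin_hiso _ _ _ g (fun x => ~~ c x)) => // [x|e].
    by rewrite -hX Hg inE.
  rewrite HE; congr [&& _, _ & _]; apply: eq_existsb => x; by rewrite negbK.
have [g [ig Hg]] := bij_ex Y cT.
apply: (@fin_hiso _ _ _ g c) => // [x|e].
  by rewrite -hX Hg inE.
by rewrite HE; case: (#|e| == 3) => //=; exact: andbC.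
Qed.


Lemma main_conc (T : finType) n (E : {set {set T}}) :
  #|T| = n -> odd n -> 9 <= n -> #|E| = b n -> uniform3 [set: T] E ->
  (forall a b c d v, dist4 a b c d -> fE E a b c -> fE E a b d -> fE E a c d -> fE E b c d ->
     out4 v a b c d -> deg (fE E) a b c d v = 5) ->
  forall a b c d v0, dist4 a b c d -> fE E a b c -> fE E a b d -> fE E a c d -> fE E b c d ->
  out4 v0 a b c d -> ~~ fE E v0 a b -> hiso [set: T] E [set: 'I_n] (Bm n).
Proof.
move=> cT on n9 cE HE Dp a b c d v0 Hd h1 h2 h3 h4 H0 n0.
have HG := G1 (@fE12 _ E) (@fE23 _ E) Dp Hd h1 h2 h3 h4 H0 n0.
move: (Hd) => /and3P[n12 n13 /and4P[n14 n23 n24 n34]].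
pose col x := if (x == a) || (x == b) then false
              else if (x == c) || (x == d) then true else ~~ fE E x c d.
have ca : col a = false by rewrite /col eqxx.
have cb : col b = false by rewrite /col eqxx orbT.
have cc : col c = true by rewrite /col [c == a]eq_sym [c == b]eq_sym (negbTE n13) (negbTE n23) eqxx.
have cd : col d = true by rewrite /col [d == a]eq_sym [d == b]eq_sym (negbTE n14) (negbTE n24) eqxx orbT.
have cO v : out4 v a b c d -> col v = ~~ fE E v c d.
  by case/and4P => v1 v2 v3 v4; rewrite /col (negbTE v1) (negbTE v2) (negbTE v3) (negbTE v4).
have CE := colE (@fE12 _ E) (@fE23 _ E) Dp Hd h1 h2 h3 h4 HG ca cb cc cd cO.
apply: (@struct_hiso _ _ _ col) => // e.
case: (boolP (#|e| == 3)) => [/eqP /card3P [x [y [z [xy xz yz ->]]]]|n3].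
  rewrite /=.
  have -> : ([set x; y; z] \in E) = fE E x y z by [].
  rewrite CE // !ex3 /mono.
  by case: (col x); case: (col y); case: (col z).
rewrite /=; apply/negP => eE.
by case: (HE e eE) => _ /eqP; rewrite (negbTE n3).
Qed.

Ltac fsymE := first [ assumption | rewrite fE12; assumption | rewrite fE23; assumption
  | rewrite fE12 fE23; assumption | rewrite fE23 fE12; assumption
  | rewrite fE12 fE23 fE12; assumption ].
Ltac neqE := rewrite /dist4 /out4; repeat (apply/andP; split); by [|rewrite eq_sym].

Theorem lemma2p6
  (H8 : forall E8 : {set {set 'I_8}},
     uniform3 [set: 'I_8] E8 -> ~ contains_fano [set: 'I_8] E8 ->
     #|E8| <= 48 /\ (#|E8| = 48 -> hiso [set: 'I_8] E8 [set: 'I_8] (Bm 8)))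
  (n : nat) (Hn9 : 9 <= n) (Hodd : odd n)
  (T : finType) (HT : #|T| = n) (E : {set {set T}})
  (HE : uniform3 [set: T] E) (HEcard : #|E| = b n)
  (Hfano : ~ contains_fano [set: T] E)
  (Htet : forall K : {set T}, tetra E K ->
     hiso (~: K) (induced E (~: K)) [set: 'I_(n - 4)] (Bm (n - 4)) /\
     (forall v, v \notin K -> degK E K v = 5)) :
  hiso [set: T] E [set: 'I_n] (Bm n).
Proof.
have Dp := D_of (fun K tK => (Htet K tK).2).
have n4 : 3 < #|T| by rewrite HT; lia.
have big : 3 * 'C(#|T|, 3) < 4 * #|E| by rewrite HT HEcard; exact: bn_big.
have [K tK] := tet_exists HE n4 big.
have [a [b [c [d [KE Hd [h1 h2 h3 h4]]]]]] := tetra_dec tK.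
have [v0 v0K] : exists v0, v0 \notin K.
  have : 0 < #|~: K| by have := cardsC K; rewrite tK.1 HT; lia.
  by case/card_gt0P => v0; rewrite inE => ?; exists v0.
have H0 : out4 v0 a b c d.
  by move: v0K; rewrite KE /out4 !inE !negb_or => /andP[/andP[/andP[-> ->] ->] ->].
have := Dp a b c d v0 Hd h1 h2 h3 h4 H0; rewrite /deg.
move: (Hd) => /and3P[n12 n13 /and4P[n14 n23 n24 n34]].
move: (H0) => /and4P[x1 x2 x3 x4].
have MC := main_conc HT Hodd Hn9 HEcard HE Dp.
case: (boolP (fE E v0 a b)) => e1; last by move=> _; apply: (MC a b c d v0).
case: (boolP (fE E v0 a c)) => e2.
  case: (boolP (fE E v0 a d)) => e3.
    case: (boolP (fE E v0 b c)) => e4.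
      case: (boolP (fE E v0 b d)) => e5.
        case: (boolP (fE E v0 c d)) => e6.
          by [].
        by move=> _; apply: (MC c d a b v0) => //; try neqE; try fsymE.
      by move=> _; apply: (MC b d a c v0) => //; try neqE; try fsymE.
    by move=> _; apply: (MC b c a d v0) => //; try neqE; try fsymE.
  by move=> _; apply: (MC a d b c v0) => //; try neqE; try fsymE.
by move=> _; apply: (MC a c b d v0) => //; try neqE; try fsymE.
Qed.
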